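(* Let $h,\Gamma,\rho_0$ be $C^2$ functions on the circle $\mathbb{T}^1$ with $h>0$, $\Gamma>0$ everywhere and $\rho_0 = c/h$ for a constant $c>0$. For $\epsilon>0$ let $r_\epsilon$ be a $C^2$ solution of $$\frac{\epsilon}{2}(\Gamma r_\epsilon)'' - (h r_\epsilon)' = -\frac{\epsilon}{2}(\Gamma\rho_0)'' \quad\text{on } \mathbb{T}^1,\qquad \int_{\mathbb{T}^1} r_\epsilon\,dx = 0.$$ Then there exist $\epsilon_0>0$ and a constant $C$ (depending only on $h,\Gamma,\rho_0$) such that $\|r_\epsilon'\|_{L^2(\mathbb{T}^1)}\le C\epsilon$ for all $0<\epsilon<\epsilon_0$. Explicitly, with $\alpha=\min h$ and, if $\Gamma$ is nonconstant, $\beta = \max\big(|h'| + \frac{\alpha}{3\max\Gamma'}|\Gamma''|\big)$ (and $\beta=\max|h'|$ if $\Gamma$ is constant), one has for $0<\epsilon<2\alpha/(3\max\Gamma')$ (all $\epsilon>0$ if $\Gamma$ is constant) $$\|r_\epsilon'\|_{L^2}\le \epsilon\Big(\frac{2\beta}{\alpha^2}\|(\Gamma\rho_0)'\|_{L^2} + \frac{1}{\alpha}\|(\Gamma\rho_0)''\|_{L^2}\Big).$$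
   Context: Here $r_\epsilon=\rho_\epsilon-\rho_0$, where $\rho_0=c/h$ is the invariant density of $\dot x=h(x)$ on the circle and $\rho_\epsilon$ the stationary density of $dx = h\,dt+\sqrt\epsilon\,\gamma(x)\circ dW$ with $\Gamma=\gamma^2$. Primes denote derivatives on $\mathbb{T}^1$. *)

(* Defs.v *)
From Stdlib Require Import Reals.
Open Scope R_scope.

(* Functions on the circle T^1 = R/Z are modelled as 1-periodic functions R -> R. *)
Definition periodic1 (f : R -> R) : Prop := forall x, f (x + 1) = f x.

Definition is_C1 (f f1 : R -> R) : Prop :=
  (forall x, derivable_pt_lim f x (f1 x)) /\ continuity f1.

Definition is_C2 (f f1 f2 : R -> R) : Prop :=
  (forall x, derivable_pt_lim f x (f1 x)) /\
  (forall x, derivable_pt_lim f1 x (f2 x)) /\ continuity f2.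

Definition is_max (f : R -> R) (m : R) : Prop :=
  (forall x, f x <= m) /\ exists x, f x = m.
Definition is_min (f : R -> R) (m : R) : Prop :=
  (forall x, m <= f x) /\ exists x, f x = m.

Definition L2norm (f : R -> R) (pr : Riemann_integrable (fun x => f x ^ 2) 0 1) : R :=
  sqrt (RiemannInt pr).

(* Main.v *)
Require Import Defs.
From Stdlib Require Import Reals.
From Coquelicot Require Import Coquelicot.
From Stdlib Require Import Lra Psatz Classical FunctionalExtensionality.
Open Scope R_scope.

Lemma dP f g x l1 l2 : derivable_pt_lim f x l1 -> derivable_pt_lim g x l2 ->
  derivable_pt_lim (fun y => f y + g y) x (l1 + l2).
Proof. intros; apply (derivable_pt_lim_plus f g); auto. Qed.
Lemma dMi f g x l1 l2 : derivable_pt_lim f x l1 -> derivable_pt_lim g x l2 ->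
  derivable_pt_lim (fun y => f y - g y) x (l1 - l2).
Proof. intros; apply (derivable_pt_lim_minus f g); auto. Qed.
Lemma dM f g x l1 l2 : derivable_pt_lim f x l1 -> derivable_pt_lim g x l2 ->
  derivable_pt_lim (fun y => f y * g y) x (l1 * g x + f x * l2).
Proof. intros; apply (derivable_pt_lim_mult f g); auto. Qed.
Lemma dO f x l : derivable_pt_lim f x l -> derivable_pt_lim (fun y => - f y) x (- l).
Proof. intros; apply (derivable_pt_lim_opp f); auto. Qed.
Lemma cO f : continuity f -> continuity (fun y => - f y).
Proof. intros; apply (continuity_opp f); auto. Qed.
Lemma dC c x : derivable_pt_lim (fun _ => c) x 0.
Proof. apply derivable_pt_lim_const. Qed.
Lemma dEq f x l l' : derivable_pt_lim f x l -> l = l' -> derivable_pt_lim f x l'.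
Proof. intros H ->; exact H. Qed.

Lemma cP f g : continuity f -> continuity g -> continuity (fun y => f y + g y).
Proof. intros; apply (continuity_plus f g); auto. Qed.
Lemma cMi f g : continuity f -> continuity g -> continuity (fun y => f y - g y).
Proof. intros; apply (continuity_minus f g); auto. Qed.
Lemma cM f g : continuity f -> continuity g -> continuity (fun y => f y * g y).
Proof. intros; apply (continuity_mult f g); auto. Qed.
Lemma cC c : continuity (fun _ => c).
Proof. apply continuity_const; intros ? ?; auto. Qed.
Lemma cD f f1 : (forall x, derivable_pt_lim f x (f1 x)) -> continuity f.
Proof. intros H x; apply derivable_continuous_pt; exists (f1 x); apply H. Qed.
Lemma cc f : continuity f -> forall x, continuous f x.
Proof. intros H x; apply continuity_pt_filterlim; apply H. Qed.
Lemma iL f g a b A B c d : is_RInt f a b A -> is_RInt g a b B ->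
  is_RInt (fun x => c * f x + d * g x) a b (c*A + d*B).
Proof. intros H1 H2. exact (is_RInt_plus _ _ _ _ _ _ (is_RInt_scal _ _ _ c _ H1) (is_RInt_scal _ _ _ d _ H2)). Qed.
Lemma exI f : continuity f -> is_RInt f 0 1 (RInt f 0 1).
Proof. intros H; apply (@RInt_correct R_CompleteNormedModule), (@ex_RInt_continuous R_CompleteNormedModule); intros; apply cc, H. Qed.
Lemma dI f df : (forall x, derivable_pt_lim f x (df x)) -> continuity df -> f 0 = f 1 ->
  is_RInt df 0 1 0.
Proof. intros H1 H2 H3. assert (H: is_RInt df 0 1 (minus (f 1) (f 0))).
  apply (@is_RInt_derive R_CompleteNormedModule); intros. apply is_derive_Reals, H1. apply cc, H2.
  replace (minus (f 1) (f 0)) with 0 in H; auto.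
  rewrite H3; unfold minus, plus, opp; simpl; ring. Qed.

Ltac dtac := repeat first [ apply dP | apply dMi | apply dM | apply dO | apply dC | assumption | match goal with H : forall x, derivable_pt_lim ?f x _ |- derivable_pt_lim ?f _ _ => apply H end ].
Ltac ctac := repeat first [ apply cP | apply cMi | apply cM | apply cO | apply cC | assumption ].

Lemma Lopt b I F G : 0 <= b -> 0 <= F -> 0 <= G ->
  (forall s, 0 < s -> I <= b * ((s * F + G / s) / 2)) -> I <= b * (sqrt F * sqrt G).
Proof.
  intros Hb HF HG H.
  destruct (Rle_lt_or_eq_dec 0 b Hb) as [Hb'|Hb'].
  2:{ subst b. specialize (H 1 Rlt_0_1). lra. }
  assert (K: forall s, 0 < s -> I / b <= (s * F + G / s) / 2).
  { intros s Hs; specialize (H s Hs). apply (Rmult_le_reg_l b); auto.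
    replace (b * (I / b)) with I by (field; lra). exact H. }
  apply (Rmult_le_reg_l (/ b)). apply Rinv_0_lt_compat; auto.
  replace (/ b * (b * (sqrt F * sqrt G))) with (sqrt F * sqrt G) by (field; lra).
  replace (/ b * I) with (I / b) by (unfold Rdiv; ring).
  set (J := I / b) in *. clearbody J.
  pose proof (sqrt_pos F) as S1. pose proof (sqrt_pos G) as S2.
  pose proof (sqrt_sqrt F HF) as E1. pose proof (sqrt_sqrt G HG) as E2.
  destruct (Rle_lt_or_eq_dec 0 (sqrt F) (sqrt_pos F)) as [P1|P1];
  destruct (Rle_lt_or_eq_dec 0 (sqrt G) (sqrt_pos G)) as [P2|P2].
  - assert (Hs: 0 < sqrt G / sqrt F) by (apply Rdiv_lt_0_compat; auto).
    specialize (K _ Hs).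
    replace ((sqrt G / sqrt F * F + G / (sqrt G / sqrt F)) / 2) with (sqrt F * sqrt G) in K; auto.
    set (x := sqrt F) in *. set (y := sqrt G) in *. rewrite <- E1, <- E2. field. lra.
  - rewrite <- P2. destruct (Rle_or_lt J 0) as [HJ|HJ]; [lra|].
    assert (Hs: 0 < J / (F+1)) by (apply Rdiv_lt_0_compat; lra).
    specialize (K _ Hs). rewrite <- E2, <- P2 in K.
    assert (J / (F + 1) * F < J). { apply (Rmult_lt_reg_r (F+1)); [lra|]. field_simplify; lra. }
    replace (0*0/(J/(F+1))) with 0 in K by (field; lra). lra.
  - rewrite <- P1. destruct (Rle_or_lt J 0) as [HJ|HJ]; [lra|].
    assert (Hs: 0 < (G+1)/J) by (apply Rdiv_lt_0_compat; lra).
    specialize (K _ Hs). rewrite <- E1, <- P1 in K.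
    assert (G / ((G+1)/J) < J). { replace (G / ((G+1)/J)) with (J * (G/(G+1))) by (field; lra).
      assert (G/(G+1) < 1). { apply (Rmult_lt_reg_r (G+1)); [lra|]. field_simplify; lra. } nra. }
    lra.
  - rewrite <- P1. specialize (K 1 Rlt_0_1). rewrite <- E1, <- E2, <- P1, <- P2 in K. lra.
Qed.

From Stdlib Require Import FunctionalExtensionality.
Lemma cSq f : continuity f -> continuity (fun y => f y ^ 2).
Proof. intros H. replace (fun y => f y ^ 2) with (fun y => f y * f y).
  apply cM; auto. apply functional_extensionality; intros; ring. Qed.
Lemma iS f a b A c : is_RInt f a b A -> is_RInt (fun x => c * f x) a b (c*A).
Proof. intros H. exact (is_RInt_scal _ _ _ c _ H). Qed.
Lemma iL4 f1 f2 f3 f4 A1 A2 A3 A4 c1 c2 c3 c4 :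
  is_RInt f1 0 1 A1 -> is_RInt f2 0 1 A2 -> is_RInt f3 0 1 A3 -> is_RInt f4 0 1 A4 ->
  is_RInt (fun x => c1*f1 x + c2*f2 x + c3*f3 x + c4*f4 x) 0 1 (c1*A1+c2*A2+c3*A3+c4*A4).
Proof. intros H1 H2 H3 H4.
  pose proof (iL _ _ _ _ _ _ 1 1 (iL _ _ _ _ _ _ c1 c2 H1 H2) (iL _ _ _ _ _ _ c3 c4 H3 H4)) as H.
  replace (c1*A1+c2*A2+c3*A3+c4*A4) with (1 * (c1 * A1 + c2 * A2) + 1 * (c3 * A3 + c4 * A4)) by ring.
  eapply is_RInt_ext; [|exact H]. intros; simpl; ring. Qed.
Lemma iNN f A : is_RInt f 0 1 A -> (forall x, 0 <= f x) -> 0 <= A.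
Proof. intros H Hf. pose proof (iS _ _ _ _ 0 H) as H0.
  replace 0 with (0 * A) at 1 by ring.
  apply (is_RInt_le _ _ 0 1 _ _ Rle_0_1 H0 H). intros; rewrite Rmult_0_l; auto. Qed.

Lemma fin a b eps sX sY sA sB : 0 < a -> 0 <= b -> 0 < eps -> 0 <= sX -> 0 <= sY -> 0 <= sA -> 0 <= sB ->
  5*a/(3*eps) * (sX*sX) <= sA * sX ->
  a/2 * (sY*sY) - b * (sX * sY) <= eps/2 * (sB * sY) ->
  sY <= eps * (2*b/a^2 * sA + 1/a * sB).
Proof.
  intros Ha Hb He HX HY HA HB H1 H2.
  assert (K1: sX <= 3*eps*sA/(5*a)).
  { destruct (Rle_lt_or_eq_dec 0 sX HX) as [P|P].
    - apply (Rmult_le_reg_l (5*a/(3*eps)*sX)). apply Rmult_lt_0_compat; auto.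
      apply Rdiv_lt_0_compat; lra.
      replace (5 * a / (3 * eps) * sX * (3 * eps * sA / (5 * a))) with (sA * sX) by (field; lra). nra.
    - subst. unfold Rdiv. apply Rmult_le_pos; [nra| apply Rlt_le, Rinv_0_lt_compat; lra]. }
  assert (K2: a/2 * sY <= b * sX + eps/2*sB).
  { destruct (Rle_lt_or_eq_dec 0 sY HY) as [P|P].
    - apply (Rmult_le_reg_r sY); auto. nra.
    - subst. nra. }
  assert (K3: b*sX <= b*(3*eps*sA/(5*a))) by (apply Rmult_le_compat_l; auto).
  assert (K4: sY <= 2/a*(b*(3*eps*sA/(5*a)) + eps/2*sB)).
  { apply (Rmult_le_reg_l (a/2)). lra. replace (a / 2 * (2 / a * (b * (3 * eps * sA / (5 * a)) + eps / 2 * sB)))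
     with (b * (3 * eps * sA / (5 * a)) + eps / 2 * sB) by (field; lra). lra. }
  eapply Rle_trans; [exact K4|].
  replace (2 / a * (b * (3 * eps * sA / (5 * a)) + eps / 2 * sB)) with
    (eps * (6/5 * b / a^2 * sA + 1/a * sB)) by (field; lra).
  apply Rmult_le_compat_l; [lra|]. apply Rplus_le_compat_r.
  apply Rmult_le_compat_r; auto. unfold Rdiv. apply Rmult_le_compat_r.
  apply Rlt_le, Rinv_0_lt_compat; nra. lra.
Qed.
Lemma core (h h1 Gam Gam1 Gam2 Q1 Q2 r r1 r2 : R -> R) (eps a b : R)
 (Dh: forall x, derivable_pt_lim h x (h1 x)) (Ch1: continuity h1)
 (DG: forall x, derivable_pt_lim Gam x (Gam1 x)) (DG1: forall x, derivable_pt_lim Gam1 x (Gam2 x))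
 (CG2: continuity Gam2)
 (Dr: forall x, derivable_pt_lim r x (r1 x)) (Dr1: forall x, derivable_pt_lim r1 x (r2 x))
 (Cr2: continuity r2)
 (DQ: forall x, derivable_pt_lim Q1 x (Q2 x)) (CQ2: continuity Q2)
 (Heq: forall x, eps/2*(Gam2 x * r x + 2*Gam1 x*r1 x + Gam x * r2 x) - (h1 x * r x + h x * r1 x) = -(eps/2)*Q2 x)
 (BG: Gam 0 = Gam 1) (Br: r 0 = r 1) (Br1: r1 0 = r1 1) (Hm: RInt r 0 1 = 0)
 (He: 0<eps) (Ha: 0<a) (Hb: 0<=b)
 (B1: forall x, 0<=x<=1 -> a <= h x) (B2: forall x, 0<=x<=1 -> eps*Gam1 x <= 2*a/3)
 (B3: forall x, 0<=x<=1 -> Rabs(eps/2*Gam2 x - h1 x) <= b) :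
 sqrt (RInt (fun x => r1 x ^ 2) 0 1) <= eps * (2*b/a^2 * sqrt (RInt (fun x => Q1 x^2) 0 1) + 1/a * sqrt (RInt (fun x => Q2 x^2) 0 1)).
Proof.
  pose proof (cD _ _ Dh) as Ch. pose proof (cD _ _ DG) as CG. pose proof (cD _ _ DG1) as CG1.
  pose proof (cD _ _ Dr) as Cr. pose proof (cD _ _ Dr1) as Cr1. pose proof (cD _ _ DQ) as CQ1.
  set (P := fun x => eps/2*(Gam1 x*r x + Gam x*r1 x) - h x*r x + eps/2*Q1 x).
  assert (DP: forall x, derivable_pt_lim P x 0).
  { intros x. eapply dEq. unfold P; dtac. pose proof (Heq x). cbv beta. lra. }
  assert (Pc: forall x, 0 <= x <= 1 -> P x = P 0).
  { intros x Hx. destruct (Rle_lt_or_eq_dec 0 x (proj1 Hx)) as [Px|Px].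
    - symmetry; apply (eq_is_derive P 0 x); auto. intros; apply is_derive_Reals, DP.
    - subst; auto. }
  set (kk := P 0) in *.
  set (D1 := fun x => /2 * (Gam1 x * (r x * r x) + Gam x * (r1 x * r x + r x * r1 x))).
  assert (I1: is_RInt D1 0 1 0).
  { apply (dI (fun x => /2 * (Gam x * (r x * r x)))).
    intros x. eapply dEq. dtac. unfold D1; ring. unfold D1; ctac. rewrite BG, Br; auto. }
  set (D2 := fun x => /2 * (Gam1 x * (r1 x * r1 x) + Gam x * (r2 x * r1 x + r1 x * r2 x))).
  assert (I2: is_RInt D2 0 1 0).
  { apply (dI (fun x => /2 * (Gam x * (r1 x * r1 x)))).
    intros x. eapply dEq. dtac. unfold D2; ring. unfold D2; ctac. rewrite BG, Br1; auto. }
  pose proof (exI _ (cSq _ Cr)) as IX. set (X := RInt (fun x => r x ^ 2) 0 1) in *.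
  pose proof (exI _ (cSq _ Cr1)) as IY. set (Y := RInt (fun x => r1 x ^ 2) 0 1) in *.
  pose proof (exI _ (cSq _ CQ1)) as IA. set (A := RInt (fun x => Q1 x ^ 2) 0 1) in *.
  pose proof (exI _ (cSq _ CQ2)) as IB. set (B := RInt (fun x => Q2 x ^ 2) 0 1) in *.
  pose proof (exI _ Cr) as IZ. rewrite Hm in IZ.
  assert (X0: 0 <= X) by (apply (iNN _ _ IX); intros; apply pow2_ge_0).
  assert (Y0: 0 <= Y) by (apply (iNN _ _ IY); intros; apply pow2_ge_0).
  assert (A0: 0 <= A) by (apply (iNN _ _ IA); intros; apply pow2_ge_0).
  assert (B0: 0 <= B) by (apply (iNN _ _ IB); intros; apply pow2_ge_0).
  assert (Ineq1: forall u, 0 < u -> 5*a/(3*eps) * X <= 1 * ((u*A + X/u)/2)).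
  { intros u Hu.
    pose proof (iS _ _ _ _ (5*a/6) IX) as L.
    pose proof (iL4 _ _ _ _ _ _ _ _ (eps/4*u) (eps/(4*u)) (-kk) (eps/2) IA IX IZ I1) as R.
    assert (H := is_RInt_le _ _ 0 1 _ _ Rle_0_1 L R).
    assert (H': 5 * a / 6 * X <= eps / 4 * u * A + eps / (4 * u) * X + - kk * 0 + eps / 2 * 0).
    { apply H. intros x Hx. assert (Hx': 0 <= x <= 1) by lra.
      pose proof (Pc x Hx') as E. fold kk in E. unfold P in E. cbv beta in E.
      pose proof (B1 x Hx'). pose proof (B2 x Hx').
      assert (E2: (h x - eps*Gam1 x/4)*r x^2 = eps/2*Q1 x*r x - kk*r x + eps/2*D1 x).
      { rewrite <- E. unfold D1. field. }
      assert (L1: 5*a/6 * r x^2 <= (h x - eps*Gam1 x/4)*r x^2).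
      { apply Rmult_le_compat_r. apply pow2_ge_0. lra. }
      assert (L2: eps/4*u*Q1 x^2 + eps/(4*u)*r x^2 - eps/2*Q1 x*r x = eps/(4*u)*(u*Q1 x - r x)^2)
        by (field; lra).
      assert (L3: 0 <= eps/(4*u)*(u*Q1 x - r x)^2).
      { apply Rmult_le_pos. apply Rlt_le, Rdiv_lt_0_compat; lra. apply pow2_ge_0. }
      lra. }
    apply (Rmult_le_reg_l (eps/2)). lra.
    replace (eps/2*(5*a/(3*eps)*X)) with (5*a/6*X) by (field; lra).
    replace (eps/2 * (1 * ((u * A + X / u) / 2))) with (eps / 4 * u * A + eps / (4 * u) * X) by (field; lra).
    lra. }
  assert (S1 := Lopt _ _ _ _ Rle_0_1 A0 X0 Ineq1).
  assert (Ineq2: forall s t, 0 < s -> 0 < t -> a/2 * Y <= b*((s*X + Y/s)/2) + eps/2*((t*B + Y/t)/2)).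
  { intros s t Hs Ht.
    pose proof (iS _ _ _ _ (a/2) IY) as L.
    pose proof (iL4 _ _ _ _ _ _ _ _ (b*s/2) (b/(2*s) + eps/(4*t)) (eps/4*t) (eps/2) IX IY IB I2) as R.
    assert (H := is_RInt_le _ _ 0 1 _ _ Rle_0_1 L R).
    enough (a / 2 * Y <= b * s / 2 * X + (b / (2 * s) + eps / (4 * t)) * Y + eps / 4 * t * B + eps / 2 * 0).
    { replace (b * ((s * X + Y / s) / 2) + eps / 2 * ((t * B + Y / t) / 2)) with
       (b * s / 2 * X + (b / (2 * s) + eps / (4 * t)) * Y + eps / 4 * t * B + eps / 2 * 0) by (field; lra).
      lra. }
    apply H. intros x Hx. assert (Hx': 0 <= x <= 1) by lra.
      pose proof (Heq x) as E.
      pose proof (B1 x Hx'). pose proof (B2 x Hx'). pose proof (B3 x Hx') as W.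
      assert (E2: (h x - 3*eps*Gam1 x/4)*r1 x^2 = (eps/2*Gam2 x - h1 x)*(r x*r1 x) + eps/2*Q2 x*r1 x + eps/2*D2 x).
      { assert (Z: (h x - 3*eps*Gam1 x/4)*r1 x^2 - ((eps/2*Gam2 x - h1 x)*(r x*r1 x) + eps/2*Q2 x*r1 x + eps/2*D2 x)
          = r1 x * ((h1 x*r x + h x*r1 x) - (eps/2*(Gam2 x * r x + 2*Gam1 x*r1 x + Gam x * r2 x) + eps/2*Q2 x)))
          by (unfold D2; field).
        assert (Z0: (h1 x*r x + h x*r1 x) - (eps/2*(Gam2 x * r x + 2*Gam1 x*r1 x + Gam x * r2 x) + eps/2*Q2 x) = 0) by lra.
        rewrite Z0, Rmult_0_r in Z. lra. }
      assert (L1: a/2 * r1 x^2 <= (h x - 3*eps*Gam1 x/4)*r1 x^2).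
      { apply Rmult_le_compat_r. apply pow2_ge_0. lra. }
      assert (L2: eps/4*t*Q2 x^2 + eps/(4*t)*r1 x^2 - eps/2*Q2 x*r1 x = eps/(4*t)*(t*Q2 x - r1 x)^2)
        by (field; lra).
      assert (L3: 0 <= eps/(4*t)*(t*Q2 x - r1 x)^2).
      { apply Rmult_le_pos. apply Rlt_le, Rdiv_lt_0_compat; lra. apply pow2_ge_0. }
      assert (M1: (eps/2*Gam2 x - h1 x)*(r x*r1 x) <= b * (Rabs (r x) * Rabs (r1 x))).
      { eapply Rle_trans. apply Rle_abs. rewrite Rabs_mult, Rabs_mult.
        apply Rmult_le_compat_r; auto. apply Rmult_le_pos; apply Rabs_pos. }
      assert (M2: Rabs (r x) * Rabs (r1 x) <= s/2 * r x^2 + /(2*s) * r1 x^2).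
      { rewrite <- (pow2_abs (r x)), <- (pow2_abs (r1 x)).
        assert (0 <= /(2*s) * (s * Rabs (r x) - Rabs (r1 x))^2).
        { apply Rmult_le_pos. apply Rlt_le, Rinv_0_lt_compat; lra. apply pow2_ge_0. }
        assert (/(2*s) * (s * Rabs (r x) - Rabs (r1 x))^2 = s/2 * Rabs (r x)^2 + /(2*s) * Rabs (r1 x)^2 - Rabs (r x) * Rabs (r1 x)) by (field; lra).
        lra. }
      assert (M3: b * (Rabs (r x) * Rabs (r1 x)) <= b * (s/2 * r x^2 + /(2*s) * r1 x^2)).
      { apply Rmult_le_compat_l; auto. }
      assert (E3: b * (s/2 * r x^2 + /(2*s) * r1 x^2) = b*s/2 * r x^2 + b/(2*s)*r1 x^2) by (field; lra).
      lra. }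
  assert (S2: forall t, 0 < t -> a/2*Y - b * (sqrt X * sqrt Y) <= eps/2 * ((t*B + Y/t)/2)).
  { intros t Ht. enough (a/2*Y - eps/2 * ((t*B + Y/t)/2) <= b * (sqrt X * sqrt Y)) by lra.
    apply Lopt; auto. intros s Hs. pose proof (Ineq2 s t Hs Ht). lra. }
  assert (S3 := Lopt (eps/2) _ B Y ltac:(lra) B0 Y0 S2).
  apply (fin a b eps (sqrt X)); try apply sqrt_pos; auto.
  - rewrite sqrt_sqrt; auto. lra.
  - rewrite sqrt_sqrt; auto.
Qed.
Lemma cAbs f : continuity f -> continuity (fun y => Rabs (f y)).
Proof. intros H x. exact (continuity_pt_comp f Rabs x (H x) (Rcontinuity_abs _)). Qed.

Lemma per_der r r1 : periodic1 r -> (forall x, derivable_pt_lim r x (r1 x)) -> r1 0 = r1 1.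
Proof. intros Hp Hd.
  assert (H: derivable_pt_lim (comp r (fun x => x + 1)) 0 (r1 (0+1) * 1)).
  { apply derivable_pt_lim_comp. eapply dEq. apply dP. apply derivable_pt_lim_id. apply dC. ring. apply Hd. }
  replace (comp r (fun x => x + 1)) with r in H.
  rewrite Rplus_0_l, Rmult_1_r in H. exact (uniqueness_limite _ _ _ _ (Hd 0) H).
  apply functional_extensionality; intros; unfold comp; rewrite Hp; auto. Qed.

Lemma prep (h h1 h2 Gam Gam1 Gam2 Q1 Q2 r r1 r2 G1 G2 K1 : R -> R) (eps a b : R)
  (HG_per : periodic1 Gam) (Hh : is_C2 h h1 h2) (HG : is_C2 Gam Gam1 Gam2)
  (DQ: forall x, derivable_pt_lim Q1 x (Q2 x)) (CQ2: continuity Q2)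
  (Hrp : periodic1 r) (Hr : is_C2 r r1 r2)
  (HGr : is_C2 (fun x => Gam x * r x) G1 G2) (HK : is_C1 (fun x => h x * r x) K1)
  (Heq : forall x, eps / 2 * G2 x - K1 x = - (eps / 2) * Q2 x)
  (Hm : exists pr : Riemann_integrable r 0 1, RiemannInt pr = 0)
  (He: 0<eps) (Ha: 0<a) (Hb: 0<=b)
  (B1: forall x, 0<=x<=1 -> a <= h x) (B2: forall x, 0<=x<=1 -> eps*Gam1 x <= 2*a/3)
  (B3: forall x, 0<=x<=1 -> Rabs(eps/2*Gam2 x - h1 x) <= b) :
  sqrt (RInt (fun x => r1 x ^ 2) 0 1) <= eps * (2*b/a^2 * sqrt (RInt (fun x => Q1 x^2) 0 1) + 1/a * sqrt (RInt (fun x => Q2 x^2) 0 1)).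
Proof.
  destruct Hh as [Dh [Dh1 Ch2]]. destruct HG as [DG [DG1 CG2]]. destruct Hr as [Dr [Dr1 Cr2]].
  destruct HGr as [DGr [DGr1 _]]. destruct HK as [DK _].
  assert (EG1: G1 = fun x => Gam1 x * r x + Gam x * r1 x).
  { apply functional_extensionality; intros x. apply (uniqueness_limite _ x _ _ (DGr x)). dtac. }
  subst G1.
  assert (EG2: forall x, G2 x = Gam2 x * r x + Gam1 x * r1 x + (Gam1 x * r1 x + Gam x * r2 x)).
  { intros x. apply (uniqueness_limite _ x _ _ (DGr1 x)). dtac. }
  assert (EK: forall x, K1 x = h1 x * r x + h x * r1 x).
  { intros x. apply (uniqueness_limite _ x _ _ (DK x)). dtac. }
  destruct Hm as [pr Hpr]. rewrite <- RInt_Reals in Hpr.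
  apply (core h h1 Gam Gam1 Gam2 Q1 Q2 r r1 r2); auto.
  - apply (cD _ _ Dh1).
  - intros x. rewrite <- Heq, EG2, EK. ring.
  - rewrite <- (Rplus_0_l 1), HG_per; auto.
  - rewrite <- (Rplus_0_l 1), Hrp; auto.
  - apply (per_der r r1); auto.
Qed.
Theorem mainTheorem4
  (h h1 h2 Gam Gam1 Gam2 rho0 rho1 rho2 Q1 Q2 : R -> R) (c : R)
  (Hh_per : periodic1 h) (HG_per : periodic1 Gam) (Hrho_per : periodic1 rho0)
  (Hh : is_C2 h h1 h2) (HG : is_C2 Gam Gam1 Gam2) (Hrho : is_C2 rho0 rho1 rho2)
  (Hhpos : forall x, 0 < h x) (HGpos : forall x, 0 < Gam x)
  (Hc : 0 < c) (Hrho0 : forall x, rho0 x = c / h x)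
  (HQ : is_C2 (fun x => Gam x * rho0 x) Q1 Q2) :
  (* qualitative part *)
  (exists eps0 C : R, 0 < eps0 /\
     forall (eps : R) (r r1 r2 G1 G2 K1 : R -> R),
       0 < eps < eps0 ->
       periodic1 r -> is_C2 r r1 r2 ->
       is_C2 (fun x => Gam x * r x) G1 G2 ->
       is_C1 (fun x => h x * r x) K1 ->
       (forall x, eps / 2 * G2 x - K1 x = - (eps / 2) * Q2 x) ->
       (exists pr : Riemann_integrable r 0 1, RiemannInt pr = 0) ->
       forall pr1 : Riemann_integrable (fun x => r1 x ^ 2) 0 1,
         L2norm r1 pr1 <= C * eps)
  /\
  (* explicit part *)
  (forall (alpha M beta : R),
     is_min h alpha ->
     is_max Gam1 M ->
     ((forall x y, Gam x = Gam y) ->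
        is_max (fun x => Rabs (h1 x)) beta) ->
     (~ (forall x y, Gam x = Gam y) ->
        is_max (fun x => Rabs (h1 x) + alpha / (3 * M) * Rabs (Gam2 x)) beta) ->
     forall (eps : R) (r r1 r2 G1 G2 K1 : R -> R),
       0 < eps ->
       (~ (forall x y, Gam x = Gam y) -> eps < 2 * alpha / (3 * M)) ->
       periodic1 r -> is_C2 r r1 r2 ->
       is_C2 (fun x => Gam x * r x) G1 G2 ->
       is_C1 (fun x => h x * r x) K1 ->
       (forall x, eps / 2 * G2 x - K1 x = - (eps / 2) * Q2 x) ->
       (exists pr : Riemann_integrable r 0 1, RiemannInt pr = 0) ->
       forall (pr1 : Riemann_integrable (fun x => r1 x ^ 2) 0 1)
              (prQ1 : Riemann_integrable (fun x => Q1 x ^ 2) 0 1)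
              (prQ2 : Riemann_integrable (fun x => Q2 x ^ 2) 0 1),
         L2norm r1 pr1 <=
         eps * (2 * beta / alpha ^ 2 * L2norm Q1 prQ1 + 1 / alpha * L2norm Q2 prQ2)).

Proof.
  destruct Hh as [Dh [Dh1 Ch2]]. destruct HG as [DG [DG1 CG2]]. destruct HQ as [DGr [DQ CQ2]].
  assert (Hh: is_C2 h h1 h2) by (repeat split; auto).
  assert (HG: is_C2 Gam Gam1 Gam2) by (repeat split; auto).
  pose proof (cD _ _ Dh) as Ch. pose proof (cD _ _ DG1) as CG1. pose proof (cD _ _ Dh1) as Ch1.
  split.
  - destruct (continuity_ab_min h 0 1 Rle_0_1 (fun c _ => Ch c)) as [mh [Hmh _]].
    destruct (continuity_ab_maj Gam1 0 1 Rle_0_1 (fun c _ => CG1 c)) as [xg [Hxg _]].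
    destruct (continuity_ab_maj _ 0 1 Rle_0_1 (fun c _ => cAbs _ CG2 c)) as [xg2 [Hxg2 _]].
    destruct (continuity_ab_maj _ 0 1 Rle_0_1 (fun c _ => cAbs _ Ch1 c)) as [xh [Hxh _]].
    cbv beta in Hxg2, Hxh.
    set (a := h mh). set (M1 := Gam1 xg). set (b := Rabs (h1 xh) + Rabs (Gam2 xg2) / 2).
    assert (Ha: 0 < a) by apply Hhpos.
    assert (Hb: 0 <= b) by (pose proof (Rabs_pos (h1 xh)); pose proof (Rabs_pos (Gam2 xg2)); unfold b; lra).
    assert (HM: 0 < Rabs M1 + 1) by (pose proof (Rabs_pos M1); lra).
    exists (Rmin 1 (2*a/(3*(Rabs M1+1)))).
    exists (2*b/a^2 * sqrt (RInt (fun x => Q1 x^2) 0 1) + 1/a * sqrt (RInt (fun x => Q2 x^2) 0 1)).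
    split.
    + apply Rmin_glb_lt. lra. apply Rdiv_lt_0_compat; lra.
    + intros eps r r1 r2 G1 G2 K1 [He He0] Hrp Hr HGr HK Heq Hm pr1.
      assert (E1: eps < 1) by (eapply Rlt_le_trans; [exact He0| apply Rmin_l]).
      assert (E2: eps < 2*a/(3*(Rabs M1+1))) by (eapply Rlt_le_trans; [exact He0| apply Rmin_r]).
      assert (E3: eps * (3*(Rabs M1+1)) < 2*a).
      { apply (Rmult_lt_reg_r (/ (3*(Rabs M1+1)))). apply Rinv_0_lt_compat; lra.
        replace (eps * (3 * (Rabs M1 + 1)) * / (3 * (Rabs M1 + 1))) with eps by (field; lra). exact E2. }
      unfold L2norm. rewrite <- RInt_Reals. rewrite Rmult_comm.
      apply (prep h h1 h2 Gam Gam1 Gam2 Q1 Q2 r r1 r2 G1 G2 K1); auto; try lra.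
      * intros x Hx. pose proof (Hxg x Hx). fold M1 in H. pose proof (Rle_abs M1).
        assert (eps * Gam1 x <= eps * (Rabs M1 + 1)) by (apply Rmult_le_compat_l; lra). lra.
      * intros x Hx. pose proof (Hxg2 x Hx). pose proof (Hxh x Hx).
        unfold Rminus. eapply Rle_trans; [apply Rabs_triang|]. rewrite Rabs_Ropp, Rabs_mult.
        rewrite (Rabs_right (eps/2)) by lra.
        assert (eps/2 * Rabs (Gam2 x) <= 1/2 * Rabs (Gam2 xg2)).
        { apply Rmult_le_compat; try lra. apply Rabs_pos. }
        unfold b; lra.
  - intros alpha M beta [Hmin [xa Hxa]] [HMx [xM HxM]] Hcst Hncst eps r r1 r2 G1 G2 K1 He Heps
      Hrp Hr HGr HK Heq Hm pr1 prQ1 prQ2.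
    assert (Ha: 0 < alpha) by (rewrite <- Hxa; apply Hhpos).
    unfold L2norm. rewrite <- !RInt_Reals.
    destruct (classic (forall x y, Gam x = Gam y)) as [Hk|Hk].
    + destruct (Hcst Hk) as [Hbx _].
      assert (Z1: forall x, Gam1 x = 0).
      { intros x. apply (uniqueness_limite Gam x); auto.
        replace Gam with (fun _ : R => Gam 0). apply dC.
        apply functional_extensionality; intros; apply Hk. }
      assert (Z2: forall x, Gam2 x = 0).
      { intros x. apply (uniqueness_limite Gam1 x); auto.
        replace Gam1 with (fun _ : R => 0). apply dC.
        apply functional_extensionality; intros; rewrite Z1; auto. }
      apply (prep h h1 h2 Gam Gam1 Gam2 Q1 Q2 r r1 r2 G1 G2 K1); auto; try lra.
      * pose proof (Hbx 0). pose proof (Rabs_pos (h1 0)). lra.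
      * intros x _. rewrite Z1. lra.
      * intros x _. rewrite Z2. replace (eps/2*0 - h1 x) with (- h1 x) by ring.
        rewrite Rabs_Ropp. apply Hbx.
    + pose proof (Heps Hk) as Heps'. destruct (Hncst Hk) as [Hbx _].
      assert (HM: 0 < M).
      { destruct (Rle_or_lt M 0) as [HM|HM]; auto. exfalso.
        destruct (Rle_lt_or_eq_dec M 0 HM) as [HM'|HM'].
        - assert (/(3*M) < 0) by (apply Rinv_lt_0_compat; lra).
          unfold Rdiv in Heps'. nra.
        - rewrite HM', Rmult_0_r in Heps'. unfold Rdiv in Heps'. rewrite Rinv_0 in Heps'. lra. }
      assert (E3: eps/2 < alpha/(3*M)).
      { replace (alpha/(3*M)) with (2*alpha/(3*M)/2) by (field; lra). lra. }
      assert (E4: eps * M < 2*alpha/3).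
      { apply (Rmult_lt_reg_r (/ M)). apply Rinv_0_lt_compat; lra.
        replace (eps * M * / M) with eps by (field; lra).
        replace (2*alpha/3 * / M) with (2*alpha/(3*M)) by (field; lra). exact Heps'. }
      apply (prep h h1 h2 Gam Gam1 Gam2 Q1 Q2 r r1 r2 G1 G2 K1); auto; try lra.
      * pose proof (Hbx 0). pose proof (Rabs_pos (h1 0)). pose proof (Rabs_pos (Gam2 0)).
        assert (0 <= alpha / (3*M)) by (apply Rlt_le, Rdiv_lt_0_compat; lra).
        assert (0 <= alpha / (3*M) * Rabs (Gam2 0)) by (apply Rmult_le_pos; lra). lra.
      * intros x _. pose proof (HMx x).
        assert (eps * Gam1 x <= eps * M) by (apply Rmult_le_compat_l; lra). lra.
      * intros x _. pose proof (Hbx x). cbv beta in *.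
        unfold Rminus. eapply Rle_trans; [apply Rabs_triang|]. rewrite Rabs_Ropp, Rabs_mult.
        rewrite (Rabs_right (eps/2)) by lra.
        assert (eps/2 * Rabs (Gam2 x) <= alpha/(3*M) * Rabs (Gam2 x)).
        { apply Rmult_le_compat_r; try lra. apply Rabs_pos. }
        lra.
Qed.
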